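(* For any $\mu,\nu\in(\omega\setminus\{0\})\cup\{\infty\}$ there is a complete theory $T_{\mu,\nu}$ and an expansion $T'_{\mu,\nu}$ of it such that ${\rm ar}(T_{\mu,\nu})=\mu$ and ${\rm ar}(T'_{\mu,\nu})=\nu$.
   Context: An expansion of $T$ is a complete theory $T'\supseteq T$ in a language containing that of $T$. For $n\geq1$, a formula of a theory $T$ is $n$-ary if it is $T$-equivalent to a Boolean combination of $T$-formulas each with at most $n$ free variables; $T$ is unary ($1$-ary) if every formula is $T$-equivalent to a Boolean combination of formulas with one free variable and formulas $x\approx y$; for $n\geq2$, $T$ is $n$-ary if all its formulas are $n$-ary; $T$ is $0$-ary if every formula is $T$-equivalent to a sentence. ${\rm ar}(T)$ is the number $n$ such that $T$ is $n$-ary and not $(n-1)$-ary, and ${\rm ar}(T)=\infty$ if $T$ is $n$-ary for no $n$. *)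

(* Defs.v *)
From mathcomp Require Import all_boot.
Set Implicit Arguments. Unset Strict Implicit. Unset Printing Implicit Defensive.

(** First-order languages: function symbols (constants = arity 0) and
    relation symbols, each with an arity. Equality is logical. *)
Record language := Language {
  fsym : Type; farity : fsym -> nat;
  rsym : Type; rarity : rsym -> nat }.

Section Syntax.
Variable L : language.

Inductive term : Type :=
  | Var : nat -> term
  | App : forall f : fsym L, ('I_(farity f) -> term) -> term.

Inductive formula : Type :=
  | FFalse : formula
  | FEq : term -> term -> formula
  | FRel : forall r : rsym L, ('I_(rarity r) -> term) -> formula
  | FNot : formula -> formula
  | FAnd : formula -> formula -> formula
  | FOr : formula -> formula -> formula
  | FImp : formula -> formula -> formula
  | FAll : nat -> formula -> formula
  | FEx : nat -> formula -> formula.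

Inductive term_occ (x : nat) : term -> Prop :=
  | occ_var : term_occ x (Var x)
  | occ_app f args i : term_occ x (args i) -> term_occ x (@App f args).

Inductive free (x : nat) : formula -> Prop :=
  | free_eq1 t u : term_occ x t -> free x (FEq t u)
  | free_eq2 t u : term_occ x u -> free x (FEq t u)
  | free_rel r args i : term_occ x (args i) -> free x (@FRel r args)
  | free_not p : free x p -> free x (FNot p)
  | free_and1 p q : free x p -> free x (FAnd p q)
  | free_and2 p q : free x q -> free x (FAnd p q)
  | free_or1 p q : free x p -> free x (FOr p q)
  | free_or2 p q : free x q -> free x (FOr p q)
  | free_imp1 p q : free x p -> free x (FImp p q)
  | free_imp2 p q : free x q -> free x (FImp p q)
  | free_all y p : x <> y -> free x p -> free x (FAll y p)
  | free_ex y p : x <> y -> free x p -> free x (FEx y p).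

Definition sentence (p : formula) : Prop := forall x, ~ free x p.

Definition at_most_free (n : nat) (p : formula) : Prop :=
  exists s : seq nat, size s <= n /\ forall x, free x p -> x \in s.

Inductive bool_comb (B : formula -> Prop) : formula -> Prop :=
  | bc_base p : B p -> bool_comb B p
  | bc_false : bool_comb B FFalse
  | bc_not p : bool_comb B p -> bool_comb B (FNot p)
  | bc_and p q : bool_comb B p -> bool_comb B q -> bool_comb B (FAnd p q)
  | bc_or p q : bool_comb B p -> bool_comb B q -> bool_comb B (FOr p q)
  | bc_imp p q : bool_comb B p -> bool_comb B q -> bool_comb B (FImp p q).

Record structure := Structure {
  dom : Type; dom_inh : dom;
  interpF : forall f : fsym L, ('I_(farity f) -> dom) -> dom;
  interpR : forall r : rsym L, ('I_(rarity r) -> dom) -> Prop }.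

Fixpoint eval (M : structure) (a : nat -> dom M) (t : term) : dom M :=
  match t with
  | Var x => a x
  | App f args => interpF (fun i => eval a (args i))
  end.

Definition upd (M : structure) (a : nat -> dom M) (x : nat) (d : dom M) :=
  fun y => if y == x then d else a y.

Fixpoint sat (M : structure) (a : nat -> dom M) (p : formula) : Prop :=
  match p with
  | FFalse => False
  | FEq t u => eval a t = eval a u
  | FRel r args => interpR (fun i => eval a (args i))
  | FNot q => ~ sat a q
  | FAnd q r => sat a q /\ sat a r
  | FOr q r => sat a q \/ sat a r
  | FImp q r => sat a q -> sat a r
  | FAll x q => forall d, sat (upd a x d) q
  | FEx x q => exists d, sat (upd a x d) q
  end.

(** Theories: sets of formulas (intended to be sentences). *)
Definition theory := formula -> Prop.

Definition model (M : structure) (T : theory) : Prop :=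
  forall p, T p -> forall a : nat -> dom M, sat a p.

Definition entails (T : theory) (p : formula) : Prop :=
  forall M : structure, model M T -> forall a : nat -> dom M, sat a p.

Definition complete (T : theory) : Prop :=
  (forall p, T p -> sentence p) /\
  (exists M : structure, model M T) /\
  (forall p, sentence p -> entails T p \/ entails T (FNot p)).

Definition T_equiv (T : theory) (p q : formula) : Prop :=
  forall M : structure, model M T -> forall a : nat -> dom M, sat a p <-> sat a q.

Definition is_var_eq (p : formula) : Prop := exists x y, p = FEq (Var x) (Var y).

Definition nary (T : theory) (n : nat) : Prop :=
  match n with
  | 0 => forall p, exists q, sentence q /\ T_equiv T p q
  | 1 => forall p, exists q,
           bool_comb (fun r => at_most_free 1 r \/ is_var_eq r) q /\ T_equiv T p q
  | n => forall p, exists q, bool_comb (at_most_free n) q /\ T_equiv T p q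
  end.

(** ar(T) = mu, where [None] encodes infinity *)
Definition arity_is (T : theory) (mu : option nat) : Prop :=
  match mu with
  | Some n => nary T n /\ (forall m, n = m.+1 -> ~ nary T m)
  | None => forall n, ~ nary T n
  end.

End Syntax.

Arguments Var {L}.

Record lang_incl (L L' : language) := LangIncl {
  mapF : fsym L -> fsym L';
  mapF_inj : injective mapF;
  mapF_ar : forall f, farity (mapF f) = farity f;
  mapR : rsym L -> rsym L';
  mapR_inj : injective mapR;
  mapR_ar : forall r, rarity (mapR r) = rarity r }.

Section Translate.
Variables (L L' : language) (m : lang_incl L L').

Fixpoint tr_term (t : term L) : term L' :=
  match t with
  | Var x => Var x
  | App f args => @App L' (mapF m f)
                    (fun i => tr_term (args (cast_ord (mapF_ar m f) i)))
  end.

Fixpoint tr (p : formula L) : formula L' :=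
  match p with
  | FFalse => FFalse L'
  | FEq t u => FEq (tr_term t) (tr_term u)
  | FRel r args => @FRel L' (mapR m r)
                     (fun i => tr_term (args (cast_ord (mapR_ar m r) i)))
  | FNot q => FNot (tr q)
  | FAnd q r => FAnd (tr q) (tr r)
  | FOr q r => FOr (tr q) (tr r)
  | FImp q r => FImp (tr q) (tr r)
  | FAll x q => FAll x (tr q)
  | FEx x q => FEx x (tr q)
  end.
End Translate.

Definition expansion (L L' : language) (T : theory L) (T' : theory L') : Prop :=
  complete T' /\ exists m : lang_incl L L', forall p, T p -> T' (tr m p).

(* Main.v *)
Require Import Defs.
From mathcomp Require Import all_boot.
From Stdlib Require Import ClassicalEpsilon FunctionalExtensionality Classical.
From Stdlib Require List.
Set Implicit Arguments. Unset Strict Implicit. Unset Printing Implicit Defensive.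

Lemma inP_In (T : eqType) (x : T) (s : seq T) : x \in s <-> List.In x s.
Proof.
elim: s => [|y s IH] //=; rewrite in_cons; split.
- by case/orP => [/eqP ->|/IH]; [left|right].
- by case=> [->|/IH ->]; rewrite ?eqxx ?orbT.
Qed.

Section Gen.
Variable L : language.
Implicit Types (p q : formula L).

Lemma occ_inv x (t : term L) : term_occ x t ->
  match t with Var y => x = y | App f args => exists i, term_occ x (args i) end.
Proof. by case=> // f args i H; exists i. Qed.

Lemma free_inv x p : free x p ->
  match p with
  | FFalse => False
  | FEq t u => term_occ x t \/ term_occ x u
  | FRel r args => exists i, term_occ x (args i)
  | FNot q => free x q
  | FAnd q r | FOr q r | FImp q r => free x q \/ free x r
  | FAll y q | FEx y q => x <> y /\ free x q
  end.
Proof. case=> *; by [|left|right|eexists; eauto|split]. Qed.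

Lemma upd_same (M : structure L) (a : nat -> dom M) x : upd a x (a x) = a.
Proof. apply: functional_extensionality => y; rewrite /upd; by case: eqP => [->|]. Qed.

Lemma eval_coinc (M : structure L) (a b : nat -> dom M) t :
  (forall x, term_occ x t -> a x = b x) -> eval a t = eval b t.
Proof.
elim: t => [x|f args IH] H /=; first by apply: H; constructor.
congr (interpF _); apply: functional_extensionality => i; apply: IH => x Hx.
by apply: H; econstructor; eauto.
Qed.

Lemma sat_coinc (M : structure L) p : forall (a b : nat -> dom M),
  (forall x, free x p -> a x = b x) -> (sat a p <-> sat b p).
Proof.
elim: p => [|t u|r args|p IH|p IHp q IHq|p IHp q IHq|p IHp q IHq|y p IH|y p IH] a b H /=.
- done.
- rewrite (@eval_coinc M a b t) ?(@eval_coinc M a b u) //; move=> x Hx; apply: H;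
   by [apply: free_eq2|apply: free_eq1].
- have -> : (fun i => eval a (args i)) = (fun i => eval b (args i)) => //.
  apply: functional_extensionality => i; apply: eval_coinc => x Hx; apply: H; econstructor; eauto.
- by rewrite (IH a b) // => x Hx; apply: H; constructor.
- by rewrite (IHp a b) ?(IHq a b) // => x Hx; apply: H; constructor.
- by rewrite (IHp a b) ?(IHq a b) // => x Hx; apply: H; constructor.
- by rewrite (IHp a b) ?(IHq a b) // => x Hx; apply: H; constructor.
- have E : forall d, (forall x, free x p -> upd a y d x = upd b y d x).
    move=> d x Hx; rewrite /upd; case: eqP => // nxy; apply: H; by constructor.
  by split=> Hd d; move: (Hd d); rewrite (IH _ _ (E d)).
- have E : forall d, (forall x, free x p -> upd a y d x = upd b y d x).
    move=> d x Hx; rewrite /upd; case: eqP => // nxy; apply: H; by constructor.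
  by split=> -[d Hd]; exists d; move: Hd; rewrite (IH _ _ (E d)).
Qed.

Fixpoint rel_in (r : rsym L) p : Prop :=
  match p with
  | FRel r' _ => r' = r
  | FNot q => rel_in r q
  | FAnd q1 q2 | FOr q1 q2 | FImp q1 q2 => rel_in r q1 \/ rel_in r q2
  | FAll _ q | FEx _ q => rel_in r q
  | _ => False
  end.

Lemma eval_inv (M : structure L) (s : dom M -> dom M) (a : nat -> dom M) t :
  (forall f args, interpF (fun i => s (args i)) = s (@interpF L M f args)) ->
  eval (fun x => s (a x)) t = s (eval a t).
Proof.
move=> HF; elim: t => [x|f args IH] //=.
rewrite -HF; congr (interpF _); apply: functional_extensionality => i; exact: IH.
Qed.

Lemma sat_inv (M : structure L) (s : dom M -> dom M) p :
  injective s -> (forall d, exists d', s d' = d) ->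
  (forall f args, interpF (fun i => s (args i)) = s (@interpF L M f args)) ->
  (forall r args, rel_in r p -> (interpR (fun i => s (args i)) <-> @interpR L M r args)) ->
  forall a, sat (fun x => s (a x)) p <-> sat a p.
Proof.
move=> Hi Hs HF.
have Hupd : forall (a : nat -> dom M) y d, upd (fun x => s (a x)) y (s d) = (fun x => s (upd a y d x)).
  by move=> a y d; apply: functional_extensionality => z; rewrite /upd; case: eqP.
elim: p => [|t u|r args|p IH|p IHp q IHq|p IHp q IHq|p IHp q IHq|y p IH|y p IH] HR a /=.
- done.
- rewrite !eval_inv //; split; [exact: Hi|by move->].
- have -> : (fun i => eval (fun x => s (a x)) (args i)) = (fun i => s (eval a (args i))).
    by apply: functional_extensionality => i; rewrite eval_inv.
  exact: HR.
- by rewrite IH.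
- by rewrite IHp ?IHq // => r args H; apply: HR; [right|left].
- by rewrite IHp ?IHq // => r args H; apply: HR; [right|left].
- by rewrite IHp ?IHq // => r args H; apply: HR; [right|left].
- split=> H d.
  + by rewrite -IH // -Hupd.
  + have [d' <-] := Hs d; rewrite Hupd IH //.
- split=> [[d H]|[d H]].
  + have [d' Hd'] := Hs d; exists d'; rewrite -IH // -Hupd Hd' //.
  + by exists (s d); rewrite Hupd IH.
Qed.

Fixpoint fvt (t : term L) : seq nat :=
  match t with
  | Var x => [:: x]
  | App f args => flatten [seq fvt (args i) | i <- enum 'I_(farity f)]
  end.

Fixpoint fv p : seq nat :=
  match p with
  | FFalse => [::]
  | FEq t u => fvt t ++ fvt u
  | FRel r args => flatten [seq fvt (args i) | i <- enum 'I_(rarity r)]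
  | FNot q => fv q
  | FAnd q r | FOr q r | FImp q r => fv q ++ fv r
  | FAll _ q | FEx _ q => fv q
  end.

Lemma occ_fvt x t : term_occ x t -> x \in fvt t.
Proof.
elim=> [|f args i _ IH] /=; first by rewrite inE.
apply/flatten_mapP; exists i => //; by rewrite mem_enum.
Qed.

Lemma free_fv x p : free x p -> x \in fv p.
Proof.
elim=> /=.
- by move=> t u /occ_fvt H; rewrite mem_cat H.
- by move=> t u /occ_fvt H; rewrite mem_cat H orbT.
- move=> r args i /occ_fvt H; apply/flatten_mapP; exists i => //; by rewrite mem_enum.
all: move=> *; rewrite ?mem_cat; by [|apply/orP; left|apply/orP; right].
Qed.

Fixpoint closeA (l : seq nat) p := if l is x :: l' then FAll x (closeA l' p) else p.

Lemma free_closeA x l p : free x (closeA l p) -> free x p /\ x \notin l.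
Proof.
elim: l => [|y l IH] //= H; move/free_inv: H => [nxy /IH [H1 H2]]; split => //.
by rewrite inE negb_or H2 andbT; apply/eqP.
Qed.

Lemma sat_closeA (M : structure L) l p :
  (forall a : nat -> dom M, sat a (closeA l p)) -> forall a : nat -> dom M, sat a p.
Proof.
elim: l => [|y l IH] //= H; apply: IH => a; by rewrite -(upd_same a y).
Qed.

Lemma closeA_sat (M : structure L) l p :
  (forall a : nat -> dom M, sat a p) -> forall a : nat -> dom M, sat a (closeA l p).
Proof. elim: l => [|y l IH] //= H a d; exact: IH. Qed.

Definition Th (M : structure L) : theory L := fun p => sentence p /\ forall a : nat -> dom M, sat a p.

Lemma Th_complete M : complete (Th M).
Proof.
split; first by move=> p [].
split; first by exists M => p [].
move=> p Hp; case: (classic (forall a : nat -> dom M, sat a p)) => H.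
- by left => N HN a; apply: HN.
- right => N HN a; apply: HN; split.
  + by move=> x /free_inv; apply: Hp.
  + move=> b /=; have [a0 Ha0] := not_all_ex_not _ _ H; move=> Hb; apply: Ha0.
    by rewrite (sat_coinc (b := b)) // => x /Hp.
Qed.

Lemma Th_equiv M p q : (forall a : nat -> dom M, sat a p <-> sat a q) -> T_equiv (Th M) p q.
Proof.
move=> H N HN.
set phi := FAnd (FImp p q) (FImp q p).
have Hc : Th M (closeA (fv phi) phi).
  split.
  - by move=> x /free_closeA [/free_fv ->].
  - by apply: closeA_sat => a /=; split => /H.
have := sat_closeA (HN _ Hc) => Hs a; have [] := Hs a; tauto.
Qed.

Lemma bc_agree (M : structure L) (B : formula L -> Prop) (a b : nat -> dom M) q :
  (forall r, B r -> (sat a r <-> sat b r)) -> bool_comb B q -> (sat a q <-> sat b q).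
Proof. move=> HB; elim => //= *; try tauto; exact: HB. Qed.

Lemma bc_mono (B B' : formula L -> Prop) q :
  (forall r, B r -> B' r) -> bool_comb B q -> bool_comb B' q.
Proof. move=> HB; elim => *; by [apply: bc_base; apply: HB|constructor]. Qed.

Fixpoint build (M : structure L) (Phi : seq (formula L)) (P : (nat -> dom M) -> Prop) : formula L :=
  match Phi with
  | [::] => if excluded_middle_informative (exists a, P a) then FNot (FFalse L) else FFalse L
  | phi :: Phi' => FOr (FAnd phi (build Phi' (fun a => P a /\ sat a phi)))
                       (FAnd (FNot phi) (build Phi' (fun a => P a /\ ~ sat a phi)))
  end.

Lemma build_spec (M : structure L) Phi : forall (P : (nat -> dom M) -> Prop) (b : nat -> dom M),
  sat b (build Phi P) <-> exists a, P a /\ forall phi, List.In phi Phi -> (sat a phi <-> sat b phi).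
Proof.
elim: Phi => [|phi Phi IH] P b /=.
- case: excluded_middle_informative => [[a Ha]|Hn] /=.
  + split => [_|_ /= //]; by exists a.
  + split => [//|[a [Ha _]]]; exfalso; apply: Hn; by exists a.
- rewrite !IH; split.
  + case=> [[Hb [a [[Ha Hp] Hq]]]|[Hb [a [[Ha Hp] Hq]]]]; exists a; split => // psi [<-|/Hq] //; tauto.
  + move=> [a [Ha Hq]]; case: (classic (sat b phi)) => Hb; [left|right]; split => //;
    exists a; (split; [split => //; rewrite Hq //; by left | move=> psi Hpsi; apply: Hq; by right]).
Qed.

Lemma bc_build (M : structure L) (B : formula L -> Prop) Phi (P : (nat -> dom M) -> Prop) :
  (forall phi, List.In phi Phi -> B phi) -> bool_comb B (build Phi P).
Proof.
elim: Phi P => [|phi Phi IH] P HB /=.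
- case: excluded_middle_informative => ?; by repeat constructor.
- have H1 : bool_comb B phi by apply: bc_base; apply: HB; left.
  have H2 : forall Q : (nat -> dom M) -> Prop, bool_comb B (build Phi Q) by move=> Q; apply: IH => psi H; apply: HB; right.
  apply: bc_or; apply: bc_and => //; exact: bc_not.
Qed.

End Gen.


Definition D := (nat * nat * bool)%type.
Definition d0 : D := (0, 0, false).
Definition inblock (m : nat) (d : D) : bool := (d.1.1 == m) && (d.1.2 < m).
Definition flip (m : nat) (f : nat -> bool) (d : D) : D :=
  if inblock m d then (d.1, d.2 (+) f d.1.2) else d.
Definition evenf (m : nat) (f : nat -> bool) := ~~ odd (count f (iota 0 m)).
Definition Sym := ((nat * seq D) + D)%type.
Definition rar (r : Sym) : nat := match r with inl mw => size mw.2 | inr _ => 1 end.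
Definition interp (r : Sym) : ('I_(rar r) -> D) -> Prop :=
  match r as r0 return ('I_(rar r0) -> D) -> Prop with
  | inl mw => fun args => all (inblock mw.1) mw.2 /\
       exists f, evenf mw.1 f /\ forall i : 'I_(size mw.2), args i = flip mw.1 f (nth d0 mw.2 i)
  | inr d => fun args => forall i, args i = d
  end.
Arguments interp : clear implicits.
Definition symok (A Nm : pred nat) (r : Sym) : bool :=
  match r with inl mw => A mw.1 | inr d => Nm d.1.1 end.
Definition rsymT (A Nm : pred nat) := {r : Sym | symok A Nm r}.
Definition LL (A Nm : pred nat) := @Language void (fun _ => 0) (rsymT A Nm) (fun r => rar (sval r)).
Definition MM (A Nm : pred nat) : structure (LL A Nm) :=
  @Structure (LL A Nm) D d0 (fun f : void => match f return ('I_0 -> D) -> D with end)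
     (fun r args => interp (sval r) args).

Lemma flip_inblock m' m f d : inblock m' (flip m f d) = inblock m' d.
Proof. by rewrite /flip; case: ifP. Qed.

Lemma flip_in m f d : inblock m d -> flip m f d = (d.1, d.2 (+) f d.1.2).
Proof. by rewrite /flip => ->. Qed.

Lemma flip_out m f d : ~~ inblock m d -> flip m f d = d.
Proof. by rewrite /flip => /negbTE ->. Qed.

Lemma flip_invol m f d : flip m f (flip m f d) = d.
Proof.
case: (boolP (inblock m d)) => H; last by rewrite !flip_out.
rewrite !flip_in ?flip_inblock //= addbK; by case: d {H} => [[]].
Qed.

Lemma flip_inj m f : injective (flip m f).
Proof. exact: (can_inj (flip_invol m f)). Qed.

Lemma flip_comp m g f d : flip m g (flip m f d) = flip m (fun i => g i (+) f i) d.
Proof.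
case: (boolP (inblock m d)) => H; last by rewrite !flip_out.
rewrite !flip_in ?flip_inblock //=; congr pair; by case: (g _); case: (f _); case: d.2.
Qed.

Lemma flip0 m d : flip m (fun _ => false) d = d.
Proof.
case: (boolP (inblock m d)) => H; last by rewrite !flip_out.
rewrite flip_in //= addbF; by case: d {H} => [[]].
Qed.

Lemma inblock_other m m' d : inblock m d -> m != m' -> ~~ inblock m' d.
Proof. by case/andP => /eqP <- _ H; rewrite /inblock (negbTE H). Qed.

Lemma odd_count_xor (g f : nat -> bool) s :
  odd (count (fun i => g i (+) f i) s) = odd (count g s) (+) odd (count f s).
Proof.
elim: s => [|x s IH] //=; rewrite !oddD IH.
by case: (g x); case: (f x); case: (odd (count g s)); case: (odd (count f s)).
Qed.

Lemma even_xor m g f : evenf m g -> evenf m f -> evenf m (fun i => g i (+) f i).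
Proof. rewrite /evenf odd_count_xor; by do 2 case: (odd _). Qed.

Lemma even0 m : evenf m (fun _ => false).
Proof. by rewrite /evenf count_pred0. Qed.

Definition sw (u v d : D) : D := if d == u then v else if d == v then u else d.

Lemma sw_invol u v d : sw u v (sw u v d) = d.
Proof.
rewrite /sw; case: (eqVneq d u) => [->|du]; first by rewrite eqxx; case: eqP.
case: (eqVneq d v) => [->|dv]; first by rewrite eqxx.
by rewrite (negbTE du) (negbTE dv).
Qed.

Lemma sw_inj u v : injective (sw u v).
Proof. exact: (can_inj (sw_invol u v)). Qed.

Lemma sw_fix u v d : d != u -> d != v -> sw u v d = d.
Proof. by rewrite /sw => /negbTE -> /negbTE ->. Qed.

Lemma sw_eq u v x t : t != u -> t != v -> (sw u v x = t <-> x = t).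
Proof.
move=> Hu Hv; split => [H|->]; last exact: sw_fix.
by rewrite -(sw_invol u v x) H sw_fix.
Qed.

Lemma flip_pres A Nm nu g (r : Sym) args : symok A Nm r -> ~~ Nm nu -> evenf nu g ->
  interp r (fun i => flip nu g (args i)) <-> interp r args.
Proof.
case: r args => [[m w]|d] args /= Hok HN Hg.
- case: (eqVneq m nu) => [->|mn].
  + have key : forall ar : 'I_(size w) -> D,
       (exists f, evenf nu f /\ forall i, ar i = flip nu f (nth d0 w i)) ->
       exists f, evenf nu f /\ forall i, flip nu g (ar i) = flip nu f (nth d0 w i).
      move=> ar [f [Hf H]]; exists (fun i => g i (+) f i); split; first exact: even_xor.
      by move=> i; rewrite H flip_comp.
    split=> -[Hw Hex]; split => //; last exact: key.
    have [f [Hf H]] := key _ Hex; exists f; split=> // i; by rewrite -H flip_invol.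
  + split=> -[Hw [f [Hf H]]]; split=> //; exists f; split=> // i.
    * have Hb : inblock m (flip m f (nth d0 w i)).
        by rewrite flip_inblock; apply: (allP Hw); apply: mem_nth.
      by rewrite -(flip_invol nu g (args i)) H flip_out //; apply: inblock_other Hb mn.
    * have Hb : inblock m (flip m f (nth d0 w i)).
        by rewrite flip_inblock; apply: (allP Hw); apply: mem_nth.
      by rewrite H flip_out //; apply: inblock_other Hb mn.
- have Hd : ~~ inblock nu d.
    apply/negP => /andP [/eqP E _]; by rewrite -E Hok in HN.
  split=> H i; first by rewrite -(flip_invol nu g (args i)) H flip_out.
  by rewrite H flip_out.
Qed.

Definition swok (r : Sym) (u v : D) : bool :=
  match r with
  | inl mw => ~~ inblock mw.1 u && ~~ inblock mw.1 v
  | inr d => (d != u) && (d != v)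
  end.

Lemma sw_pres (r : Sym) args u v : swok r u v ->
  interp r (fun i => sw u v (args i)) <-> interp r args.
Proof.
case: r args => [[m w]|d] args /= /andP [Hu Hv].
- split=> -[Hw [f [Hf H]]]; split=> //; exists f; split=> // i; move: (H i).
  + have Hb : inblock m (flip m f (nth d0 w i)).
      by rewrite flip_inblock; apply: (allP Hw); apply: mem_nth.
    rewrite sw_eq //; apply/eqP => E; [by rewrite -E Hb in Hu|by rewrite -E Hb in Hv].
  + have Hb : inblock m (flip m f (nth d0 w i)).
      by rewrite flip_inblock; apply: (allP Hw); apply: mem_nth.
    rewrite -sw_eq //; [exact| |]; apply/eqP => E; [by rewrite -E Hb in Hu|by rewrite -E Hb in Hv].
- split=> H i; move: (H i); by rewrite sw_eq.
Qed.


Section Neg.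
Variables (A Nm : pred nat) (nu : nat).
Hypotheses (Hnu : 0 < nu) (HA : A nu) (HN : ~~ Nm nu).
Let M := MM A Nm.

Definition alpha (y : nat) : D := (nu, minn y nu.-1, false).
Definition beta (y : nat) : D := (nu, minn y nu.-1, minn y nu.-1 == 0).

Lemma inblock_alpha y : inblock nu (alpha y).
Proof. by rewrite /inblock /= eqxx /= (leq_ltn_trans (geq_minr _ _)) // ltn_predL. Qed.

Lemma flip_alpha g y : flip nu g (alpha y) = (nu, minn y nu.-1, g (minn y nu.-1)).
Proof. by rewrite flip_in ?inblock_alpha. Qed.

Lemma count_pred1_iota k : k < nu -> count (fun i => i == k) (iota 0 nu) = 1.
Proof. move=> Hk; by rewrite (count_uniq_mem _ (iota_uniq 0 nu)) mem_iota /= Hk. Qed.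

Lemma flip_sat_inv (g : nat -> bool) (p : formula (LL A Nm)) (a : nat -> D) :
  evenf nu g -> sat (M := M) (fun x => flip nu g (a x)) p <-> sat (M := M) a p.
Proof.
move=> Hg; apply: sat_inv.
- exact: flip_inj.
- by move=> d; exists (flip nu g d); rewrite flip_invol.
- by case.
- move=> r args _; exact: (flip_pres _ (proj2_sig r) HN Hg).
Qed.

Lemma agree_amf (r : formula (LL A Nm)) : at_most_free nu.-1 r ->
  (sat (M := M) alpha r <-> sat (M := M) beta r).
Proof.
move=> [s [Hs Hfree]].
set l := map (fun y => minn y nu.-1) s.
have [j Hj Hjl] : exists2 j, j < nu & j \notin l.
  case: (boolP (all (fun j => j \in l) (iota 0 nu))) => [Hall|].
  - have := uniq_leq_size (iota_uniq 0 nu) (fun j Hj => allP Hall j Hj).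
    rewrite size_iota size_map => H; have := leq_trans H Hs; by rewrite leqNgt ltn_predL Hnu.
  - by move/allPn => [j Hj Hjl]; exists j => //; rewrite mem_iota in Hj.
set g := fun i => (i == 0) (+) (i == j).
have Hg : evenf nu g.
  rewrite /evenf /g odd_count_xor !count_pred1_iota //.
have Hfb : forall y, y \in s -> beta y = flip nu g (alpha y).
  move=> y Hy; rewrite flip_alpha /beta /g.
  have : minn y nu.-1 != j.
    apply/eqP => E; move: Hjl; by rewrite -E /l (map_f (fun y => minn y nu.-1) Hy).
  by move/negbTE => ->; rewrite addbF.
rewrite (@sat_coinc _ M _ beta (fun x => flip nu g (alpha x))); last first.
  by move=> x /Hfree /Hfb.
by rewrite flip_sat_inv.
Qed.

Lemma agree_eq (r : formula (LL A Nm)) : is_var_eq r ->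
  (sat (M := M) alpha r <-> sat (M := M) beta r).
Proof.
move=> [x [y ->]] /=; rewrite /alpha /beta; split.
- by case=> ->.
- by case=> ->.
Qed.

Definition w0 := map alpha (iota 0 nu).
Definition r0 : rsymT A Nm := exist _ (inl (nu, w0)) HA.
Definition p0 : formula (LL A Nm) := @FRel (LL A Nm) r0 (fun i => Var i).

Lemma size_w0 : size w0 = nu.
Proof. by rewrite size_map size_iota. Qed.

Lemma sat_alpha : sat (M := M) alpha p0.
Proof.
rewrite /= /interp /=; split.
- apply/allP => d /mapP [y _ ->]; exact: inblock_alpha.
- exists (fun _ => false); split; first exact: even0.
  move=> i; have Hi : i < nu by rewrite -size_w0.
  by rewrite /w0 (nth_map 0) ?nth_iota ?size_iota // flip0.
Qed.

Lemma not_beta : ~ sat (M := M) beta p0.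
Proof.
rewrite /= /interp /= => -[_ [f [Hf H]]].
have Hfi : forall i, i < nu -> f i = (i == 0).
  move=> i Hi; have Hi' : i < size w0 by rewrite size_w0.
  have := H (Ordinal Hi'); rewrite /= (nth_map 0) ?nth_iota ?size_iota //= flip_alpha /beta.
  have -> : minn i nu.-1 = i by apply/minn_idPl; rewrite -ltnS prednK.
  by case=> ->.
move: Hf; rewrite /evenf (@eq_in_count _ _ (fun i => i == 0)) ?count_pred1_iota //.
by move=> i; rewrite mem_iota add0n => /Hfi.
Qed.

Lemma NEG : ~ nary (Th M) nu.-1.
Proof.
move=> Hn.
have key : forall q, bool_comb (fun r => at_most_free nu.-1 r \/ is_var_eq r) q ->
    T_equiv (Th M) p0 q -> False.
  move=> q Hq He; have HM : model M (Th M) by move=> p [].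
  have Hab : sat (M := M) alpha q <-> sat (M := M) beta q.
    apply: (bc_agree _ Hq) => r [/agree_amf|/agree_eq] //.
  have := He M HM alpha; have := He M HM beta; have := sat_alpha; have := not_beta; tauto.
move: Hn; case E: nu.-1 => [|[|k]] /= Hn.
- have [q [Hq He]] := Hn p0; apply: (key q) => //; apply: bc_base; left.
  by rewrite E; exists [::]; split => // x /Hq.
- have [q [Hq He]] := Hn p0; apply: (key q) => //; by rewrite E.
- have [q [Hq He]] := Hn p0; apply: (key q) => //; apply: bc_mono Hq => r Hr; left; by rewrite E.
Qed.
End Neg.

Section Exp.
Variables A Nm A' Nm' : pred nat.
Hypotheses (HA : forall k, A k -> A' k) (HN : forall k, Nm k -> Nm' k).

Lemma symok_incl r : symok A Nm r -> symok A' Nm' r.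
Proof. case: r => [[m w]|d] /=; [exact: HA|exact: HN]. Qed.

Definition mapRx (r : rsymT A Nm) : rsymT A' Nm' := exist _ (sval r) (symok_incl (proj2_sig r)).

Lemma mapRx_inj : injective mapRx.
Proof.
move=> [r1 p1] [r2 p2] /= H; have E := congr1 sval H; simpl in E; subst.
congr exist; exact: bool_irrelevance.
Qed.

Definition incl : lang_incl (LL A Nm) (LL A' Nm') :=
  @LangIncl (LL A Nm) (LL A' Nm') (fun f : void => f) (fun x y H => H) (fun f => erefl)
    mapRx mapRx_inj (fun r => erefl).

Lemma term_var L' (t : term L') : (Defs.fsym L' -> False) -> exists x, t = Var x.
Proof. case: t => [x|f args] H; [by exists x|by case: (H f)]. Qed.

Lemma tr_sat (p : formula (LL A Nm)) : forall a : nat -> D,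
  sat (M := MM A' Nm') a (tr incl p) <-> sat (M := MM A Nm) a p.
Proof.
elim: p => [|t u|r args|p IH|p IHp q IHq|p IHp q IHq|p IHp q IHq|y p IH|y p IH] a /=.
- done.
- have [x ->] := term_var t (fun f => match f with end).
  by have [z ->] := term_var u (fun f => match f with end).
- have -> : (fun i => eval (M := MM A' Nm') a (tr_term incl (args (cast_ord (mapR_ar incl r) i))))
           = (fun i => eval (M := MM A Nm) a (args i)).
    apply: functional_extensionality => i; rewrite cast_ord_id.
    by have [x ->] := term_var (args i) (fun f => match f with end).
  exact: iff_refl.
- have := IH a; tauto.
- have := IHp a; have := IHq a; tauto.
- have := IHp a; have := IHq a; tauto.
- have := IHp a; have := IHq a; tauto.
- split=> H d; [apply/(IH (upd (M:=MM A Nm) a y d)); exact: H d | apply/(IH (upd (M:=MM A Nm) a y d)); exact: H d].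
- split=> -[d H]; exists d; [apply/(IH (upd (M:=MM A Nm) a y d)); exact: H | apply/(IH (upd (M:=MM A Nm) a y d)); exact: H].
Qed.

Lemma tr_free x (p : formula (LL A Nm)) : free x (tr incl p) -> free x p.
Proof.
elim: p => [|t u|r args|p IH|p IHp q IHq|p IHp q IHq|p IHp q IHq|y p IH|y p IH] /= /free_inv.
- done.
- have [z ->] := term_var t (fun f => match f with end).
  have [z' ->] := term_var u (fun f => match f with end).
  by case=> /occ_inv ->; [apply: free_eq1|apply: free_eq2]; constructor.
- move=> [i H]; apply: (free_rel (i := cast_ord (mapR_ar incl r) i)).
  have [z E] := term_var (args (cast_ord (mapR_ar incl r) i)) (fun f => match f with end).
  by move: H; rewrite E => /occ_inv ->; constructor.
- by move/IH; constructor.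
- by case=> [/IHp|/IHq]; constructor.
- by case=> [/IHp|/IHq]; constructor.
- by case=> [/IHp|/IHq]; constructor.
- by case=> [? /IH]; constructor.
- by case=> [? /IH]; constructor.
Qed.

Lemma EXP : expansion (Th (MM A Nm)) (Th (MM A' Nm')).
Proof.
split; first exact: Th_complete.
exists incl => p [Hs Hsat]; split.
- by move=> x /tr_free; apply: Hs.
- by move=> a; rewrite tr_sat.
Qed.
End Exp.


Lemma nary_of L (T : theory L) n : 0 < n ->
  (forall p, exists q, bool_comb (fun r => at_most_free n r \/ is_var_eq r) q /\ T_equiv T p q) ->
  nary T n.
Proof.
case: n => [//|[|n]] _ H p /=; first exact: H.
have [q [Hq He]] := H p; exists q; split => //; apply: bc_mono Hq => r [//|[x [y ->]]].
exists [:: x; y]; split => // z /free_inv [/occ_inv ->|/occ_inv ->]; by rewrite !inE eqxx ?orbT.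
Qed.

Fixpoint tuples (T : Type) (s : seq T) (n : nat) : seq (seq T) :=
  if n is n'.+1 then flatten [seq [seq x :: t | t <- tuples s n'] | x <- s] else [:: [::]].

Lemma size_tuples (T : eqType) (s : seq T) n t : t \in tuples s n -> size t = n.
Proof.
elim: n t => [|n IH] t /=; first by rewrite inE => /eqP ->.
by move/flatten_mapP => [x _ /mapP [t' /IH Ht ->]] /=; rewrite Ht.
Qed.

Lemma mem_tuples (T : eqType) (s : seq T) n t :
  size t = n -> all (fun x => x \in s) t -> t \in tuples s n.
Proof.
elim: t n => [|x t IH] [|n] //= [Hn] /andP [Hx Ht].
apply/flatten_mapP; exists x => //; apply/mapP; exists t => //; exact: IH.
Qed.

Definition blockpts (m : nat) : seq D := flatten [seq [:: (m, i, false); (m, i, true)] | i <- iota 0 m].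

Lemma inblock_pts m d : inblock m d -> d \in blockpts m.
Proof.
case: d => [[k i] b] /andP [/eqP /= -> Hi]; apply/flatten_mapP; exists i.
- by rewrite mem_iota.
- by case: b; rewrite !inE eqxx ?orbT.
Qed.

Lemma pts_blk m d : d \in blockpts m -> d.1.1 = m.
Proof. by move/flatten_mapP => [i _]; rewrite !inE => /orP [] /eqP ->. Qed.

Lemma map_flip0 m w : map (flip m (fun _ => false)) w = w.
Proof. by elim: w => [|d w IH] //=; rewrite flip0 IH. Qed.

Lemma map_eq_mem (g1 g2 : nat -> D) l : map g1 l = map g2 l -> forall y, y \in l -> g1 y = g2 y.
Proof.
elim: l => [|z l IH] //= E y; case: E => E1 E2.
rewrite in_cons => /orP [/eqP ->|Hy]; [done|exact: IH].
Qed.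

Definition swaps (ps : seq (D * D)) (d : D) : D := foldr (fun uv d => sw uv.1 uv.2 d) d ps.

Section Swaps.
Variable fr : pred D.
Definition frl (ps : seq (D * D)) := all (fun uv => fr uv.1 && fr uv.2) ps.

Lemma sw_free u v d : fr u -> fr v -> fr (sw u v d) = fr d.
Proof.
move=> Hu Hv; rewrite /sw; case: (eqVneq d u) => [->|_]; first by rewrite Hu Hv.
by case: (eqVneq d v) => [->|_] //; rewrite Hu Hv.
Qed.

Lemma swaps_free ps d : frl ps -> fr (swaps ps d) = fr d.
Proof. elim: ps => [|[u v] ps IH] //= /andP [/andP [Hu Hv] Hps]; by rewrite sw_free ?IH. Qed.

Lemma swaps_nfree ps d : frl ps -> ~~ fr d -> swaps ps d = d.
Proof.
elim: ps => [|[u v] ps IH] //= /andP [/andP [Hu Hv] Hps] Hd; rewrite IH // sw_fix //.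
- by apply/eqP => E; rewrite E Hu in Hd.
- by apply/eqP => E; rewrite E Hv in Hd.
Qed.

Lemma swaps_inj ps : injective (swaps ps).
Proof. elim: ps => [|[u v] ps IH] //= x y /sw_inj; exact: IH. Qed.

Lemma swaps_exist (a1 b : nat -> D) (s : seq nat) :
  (forall x y, x \in s -> y \in s -> (a1 x = a1 y <-> b x = b y)) ->
  (forall x, x \in s -> ~~ fr (a1 x) -> a1 x = b x) ->
  (forall x, x \in s -> fr (a1 x) = fr (b x)) ->
  exists ps, frl ps /\ forall x, x \in s -> swaps ps (a1 x) = b x.
Proof.
elim: s => [|x s IH] H1 H2 H3; first by exists [::].
have [ps [Hps Hs]] : exists ps, frl ps /\ forall x, x \in s -> swaps ps (a1 x) = b x.
  apply: IH => [y z Hy Hz|y Hy|y Hy].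
  - by apply: H1; rewrite in_cons ?Hy ?Hz orbT.
  - by apply: H2; rewrite in_cons Hy orbT.
  - by apply: H3; rewrite in_cons Hy orbT.
have Hx : x \in x :: s by rewrite in_cons eqxx.
set c := swaps ps (a1 x).
case: (eqVneq c (b x)) => [Ec|Nc].
  by exists ps; split => // y; rewrite in_cons => /orP [/eqP ->|/Hs].
have fa1 : fr (a1 x).
  apply/negP => nf; move/eqP: Nc; apply; have nf' : ~~ fr (a1 x) by apply/negP.
  by rewrite /c swaps_nfree //; apply: H2.
have fc : fr c by rewrite /c swaps_free.
have fb : fr (b x) by rewrite -H3.
exists ((c, b x) :: ps); split; first by rewrite /frl /= fc fb.
move=> y; rewrite in_cons => /orP [/eqP ->|Hy]; first by rewrite /= /sw -/c eqxx.
have Hy' : y \in x :: s by rewrite in_cons Hy orbT.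
rewrite /= Hs //; apply: sw_fix.
- apply/eqP => E; have E' : a1 y = a1 x.
    apply: (@swaps_inj ps); rewrite Hs // E.
  have := (H1 y x Hy' Hx).1 E'; move=> Eb; move/eqP: Nc; apply; by rewrite -E Eb.
- apply/eqP => E; have E' : a1 y = a1 x by apply/(H1 y x Hy' Hx).
  move/eqP: Nc; apply; by rewrite /c -E' Hs // E.
Qed.
End Swaps.


Section Pos.
Variables (A Nm : pred nat) (nu : nat).
Hypotheses (Hnu : 0 < nu) (HA : A nu) (HN : ~~ Nm nu)
  (Hname : forall k, A k -> k != nu -> Nm k).
Let M := MM A Nm.
Let F := formula (LL A Nm).

Fixpoint relsS (p : F) : seq Sym :=
  match p with
  | FRel r _ => [:: sval r]
  | FNot q => relsS q
  | FAnd q r | FOr q r | FImp q r => relsS q ++ relsS r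
  | FAll _ q | FEx _ q => relsS q
  | _ => [::]
  end.

Lemma rel_in_relsS r (p : F) : rel_in r p -> sval r \in relsS p.
Proof.
elim: p => [|t u|r' args|p IH|p IHp q IHq|p IHp q IHq|p IHp q IHq|y p IH|y p IH] //=.
- by move=> ->; rewrite inE.
all: try (by case=> [/IHp|/IHq]; rewrite mem_cat => ->; rewrite ?orbT).
Qed.

Lemma relsS_ok (p : F) r : r \in relsS p -> symok A Nm r.
Proof.
elim: p => [|t u|r' args|p IH|p IHp q IHq|p IHp q IHq|p IHp q IHq|y p IH|y p IH] //=.
- by rewrite inE => /eqP ->; exact: (proj2_sig r').
all: try (by rewrite mem_cat => /orP [/IHp|/IHq]).
Qed.

Definition symK (r : Sym) : seq D :=
  match r with inl mw => if mw.1 == nu then [::] else blockpts mw.1 | inr d => [:: d] end.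

Definition Kp (p : F) : seq D := flatten [seq symK r | r <- relsS p].

Lemma K_named p c : c \in Kp p -> Nm c.1.1.
Proof.
move/flatten_mapP => [r /relsS_ok]; case: r => [[m w]|d] /= Hok.
- case: eqP => // /eqP Hm /pts_blk ->; exact: Hname.
- by rewrite inE => /eqP ->.
Qed.

Lemma K_block p m w d : inl (m, w) \in relsS p -> m != nu -> inblock m d -> d \in Kp p.
Proof.
move=> Hr Hm Hd; apply/flatten_mapP; exists (inl (m, w)) => //=.
by rewrite (negbTE Hm); apply: inblock_pts.
Qed.

Lemma K_name p d : inr d \in relsS p -> d \in Kp p.
Proof. move=> Hr; apply/flatten_mapP; exists (inr d) => //=; by rewrite inE. Qed.

Definition eqF (x y : nat) : F := FEq (Var x) (Var y).
Definition nameF (x : nat) (c : D) : F :=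
  match (insub (inr c : Sym) : option (rsymT A Nm)) with
  | Some r => @FRel (LL A Nm) r (fun _ => Var x)
  | None => FFalse _
  end.
Definition orbFm (t : seq nat) (w : seq D) : F :=
  match (insub (inl (nu, w) : Sym) : option (rsymT A Nm)) with
  | Some r => @FRel (LL A Nm) r (fun i => Var (nth 0 t i))
  | None => FFalse _
  end.

Definition orbL (w u : seq D) : Prop :=
  all (inblock nu) w /\ exists f, evenf nu f /\ u = map (flip nu f) w.

Lemma sat_nameF (a : nat -> D) x c : Nm c.1.1 -> (sat (M := M) a (nameF x c) <-> a x = c).
Proof.
move=> Hc; rewrite /nameF; case: insubP => [r _ Hv|]; last by rewrite /= Hc.
case: r Hv => r' pr' /= Hv; subst r' => /=; split; [by move/(_ ord0)|by move=> H i].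
Qed.

Lemma sat_orbF (a : nat -> D) t w : size t = size w ->
  (sat (M := M) a (orbFm t w) <-> orbL w (map a t)).
Proof.
move=> Hs; rewrite /orbFm; case: insubP => [r _ Hv|]; last by rewrite /= HA.
case: r Hv => r' pr' /= Hv; subst r' => /=.
split=> -[Hw [f [Hf H]]]; split=> //; exists f; split=> //.
- apply: (@eq_from_nth _ d0); first by rewrite !size_map.
  move=> i; rewrite size_map => Hi; have Hi' : i < size w by rewrite -Hs.
  rewrite (nth_map 0) // (nth_map d0) //; exact: (H (Ordinal Hi')).
- move=> i; have := congr1 (fun u => nth d0 u i) H.
  by rewrite /= (nth_map 0) ?(nth_map d0) ?Hs.
Qed.

Definition Phi (p : F) : seq F :=
  List.app (List.flat_map (fun x => List.map (eqF x) (fv p)) (fv p))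
  (List.app (List.flat_map (fun x => List.map (nameF x) (Kp p)) (fv p))
    (List.flat_map (fun t => List.map (orbFm t) (tuples (blockpts nu) nu)) (tuples (fv p) nu))).

Lemma In_eqF p x y : x \in fv p -> y \in fv p -> List.In (eqF x y) (Phi p).
Proof.
move=> Hx Hy; apply: List.in_or_app; left; apply/List.in_flat_map; exists x.
split; [exact/inP_In|apply: List.in_map; exact/inP_In].
Qed.

Lemma In_nameF p x c : x \in fv p -> c \in Kp p -> List.In (nameF x c) (Phi p).
Proof.
move=> Hx Hy; apply: List.in_or_app; right; apply: List.in_or_app; left.
apply/List.in_flat_map; exists x.
split; [exact/inP_In|apply: List.in_map; exact/inP_In].
Qed.

Lemma In_orbF p t w : t \in tuples (fv p) nu -> w \in tuples (blockpts nu) nu ->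
  List.In (orbFm t w) (Phi p).
Proof.
move=> Hx Hy; apply: List.in_or_app; right; apply: List.in_or_app; right.
apply/List.in_flat_map; exists t.
split; [exact/inP_In|apply: List.in_map; exact/inP_In].
Qed.

Lemma Phi_prop p phi : List.In phi (Phi p) -> at_most_free nu phi \/ is_var_eq phi.
Proof.
move=> H; apply List.in_app_iff in H; case: H => [H|H].
  apply List.in_flat_map in H; case: H => x [Hx H]; apply List.in_map_iff in H; case: H => y [<- Hy].
  right; by exists x, y.
apply List.in_app_iff in H; case: H => H; apply List.in_flat_map in H; case: H => x [Hx H];
  apply List.in_map_iff in H; case: H => y [<- Hy].
- left; exists [:: x]; split => // z; rewrite /nameF; case: insubP => [r _ _|_] /free_inv //.
  by move=> [i /occ_inv ->]; rewrite inE.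
- left; exists x; move/inP_In: Hx => /size_tuples Hx; split; first by rewrite Hx.
  move=> z; rewrite /orbFm; case: insubP => [r _ Hv|_]; last by move/free_inv.
  case: r Hv => r' pr' /= Hv; subst r' => /free_inv [i /occ_inv ->].
  apply: mem_nth; rewrite Hx; move/inP_In: Hy => /size_tuples <-; exact: ltn_ord.
Qed.

Section Claim.
Variables (p : F) (a b : nat -> D).
Hypothesis HE : forall phi, List.In phi (Phi p) -> (sat (M := M) a phi <-> sat (M := M) b phi).

Let s := fv p.
Let K := Kp p.

Lemma F1 x y : x \in s -> y \in s -> (a x = a y <-> b x = b y).
Proof. move=> Hx Hy; exact: (HE (In_eqF Hx Hy)). Qed.

Lemma F2 x c : x \in s -> c \in K -> (a x = c <-> b x = c).
Proof.
move=> Hx Hc; have := HE (In_nameF Hx Hc); have Hn := K_named Hc.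
have := sat_nameF a x Hn; have := sat_nameF b x Hn; tauto.
Qed.

Lemma F3gen (a' b' : nat -> D) :
  (forall t w, t \in tuples s nu -> w \in tuples (blockpts nu) nu ->
     orbL w (map a' t) -> orbL w (map b' t)) ->
  forall t, t \in tuples s nu -> all (inblock nu) (map a' t) ->
  exists f, evenf nu f /\ map b' t = map (flip nu f) (map a' t).
Proof.
move=> H t Ht Hall.
have Hw : map a' t \in tuples (blockpts nu) nu.
  apply: mem_tuples; first by rewrite size_map (size_tuples Ht).
  apply/allP => d Hd; apply: inblock_pts; exact: (allP Hall).
have [_ [f [Hf E]]] := H t _ Ht Hw (conj Hall (ex_intro _ (fun _ => false) (conj (even0 nu) (esym (map_flip0 nu _))))).
by exists f.
Qed.

Lemma Hab t w : t \in tuples s nu -> w \in tuples (blockpts nu) nu ->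
  orbL w (map a t) -> orbL w (map b t).
Proof.
move=> Ht Hw; have Hsz : size t = size w by rewrite (size_tuples Ht) (size_tuples Hw).
have := HE (In_orbF Ht Hw); have := sat_orbF a Hsz; have := sat_orbF b Hsz; tauto.
Qed.

Lemma Hba t w : t \in tuples s nu -> w \in tuples (blockpts nu) nu ->
  orbL w (map b t) -> orbL w (map a t).
Proof.
move=> Ht Hw; have Hsz : size t = size w by rewrite (size_tuples Ht) (size_tuples Hw).
have := HE (In_orbF Ht Hw); have := sat_orbF a Hsz; have := sat_orbF b Hsz; tauto.
Qed.

Lemma nseq_tuple x : x \in s -> x :: nseq nu.-1 x \in tuples s nu.
Proof.
move=> Hx; apply: mem_tuples; first by rewrite /= size_nseq prednK.
by rewrite /= Hx /=; apply/allP => y; rewrite mem_nseq => /andP [_ /eqP ->].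
Qed.

Lemma F4gen (a' b' : nat -> D) :
  (forall t w, t \in tuples s nu -> w \in tuples (blockpts nu) nu ->
     orbL w (map a' t) -> orbL w (map b' t)) ->
  forall x, x \in s -> inblock nu (a' x) -> inblock nu (b' x).
Proof.
move=> H x Hx Hin.
have Hall : all (inblock nu) (map a' (x :: nseq nu.-1 x)).
  by rewrite /= Hin /= map_nseq all_nseq Hin orbT.
have [f [_ E]] := F3gen H (nseq_tuple Hx) Hall.
case: E => -> _; by rewrite flip_inblock.
Qed.

Lemma F4 x : x \in s -> inblock nu (a x) = inblock nu (b x).
Proof. move=> Hx; apply/idP/idP; [exact: F4gen Hab x Hx|exact: F4gen Hba x Hx]. Qed.


Lemma flip_step : exists f, evenf nu f /\
  forall x, x \in s -> inblock nu (a x) -> b x = flip nu f (a x).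
Proof.
case: (boolP (has (fun x => inblock nu (a x)) s)) => [/hasP [xs Hxs Hin]|/hasPn Hn]; last first.
  exists (fun _ => false); split; first exact: even0.
  by move=> x /Hn /negP.
pose pick i := head xs [seq z <- s | inblock nu (a z) && ((a z).1.2 == i)].
have Hpick : forall i, pick i \in s /\ inblock nu (a (pick i)).
  move=> i; rewrite /pick; case E: [seq z <- s | _] => [|y l] /=; first by [].
  have : y \in [seq z <- s | inblock nu (a z) && ((a z).1.2 == i)] by rewrite E inE eqxx.
  by rewrite mem_filter => /andP [/andP [-> _] ->].
have Hpair : forall x, x \in s -> inblock nu (a x) -> (a (pick (a x).1.2)).1.2 = (a x).1.2.
  move=> x Hx Hinx; rewrite /pick; case E: [seq z <- s | _] => [|y l] /=.
  - have : x \in [seq z <- s | inblock nu (a z) && ((a z).1.2 == (a x).1.2)].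
      by rewrite mem_filter Hinx eqxx Hx.
    by rewrite E.
  - have : y \in [seq z <- s | inblock nu (a z) && ((a z).1.2 == (a x).1.2)].
      by rewrite E inE eqxx.
    by rewrite mem_filter => /andP [/andP [_ /eqP ->] _].
set t := map pick (iota 0 nu).
have Ht : t \in tuples s nu.
  apply: mem_tuples; first by rewrite size_map size_iota.
  apply/allP => y /mapP [i _ ->]; exact: (Hpick i).1.
have Hallt : all (inblock nu) (map a t).
  apply/allP => d /mapP [y /mapP [i _ ->] ->]; exact: (Hpick i).2.
have [f [Hf E]] := F3gen Hab Ht Hallt.
rewrite -map_comp in E.
have Hpf : forall i, i < nu -> b (pick i) = flip nu f (a (pick i)).
  move=> i Hi; apply: (map_eq_mem E); apply: map_f; by rewrite mem_iota.
exists f; split => // x Hx Hinx.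
have Hpi := Hpair x Hx Hinx.
have [i Hieq] : exists i, (a x).1.2 = i by eexists.
rewrite Hieq in Hpi.
have Hi : i < nu by rewrite -Hieq; case/andP: Hinx.
set t2 := x :: nseq nu.-1 (pick i).
have Ht2 : t2 \in tuples s nu.
  apply: mem_tuples; first by rewrite /= size_nseq prednK.
  rewrite /= Hx /=; apply/allP => y; rewrite mem_nseq => /andP [_ /eqP ->]; exact: (Hpick i).1.
have Hall2 : all (inblock nu) (map a t2).
  by rewrite /= Hinx /= map_nseq all_nseq (Hpick i).2 orbT.
have [f2 [Hf2 E2]] := F3gen Hab Ht2 Hall2.
rewrite -map_comp in E2.
have Hbx : b x = flip nu f2 (a x) by apply: (map_eq_mem E2); rewrite inE eqxx.
suff Hfi : f2 i = f i by rewrite Hbx !flip_in // Hieq Hfi.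
case: (posnP nu.-1) => [H0|Hpos].
- have nu1 : nu = 1 by rewrite -(prednK Hnu) H0.
  move: Hf Hf2 Hi; rewrite /evenf nu1 /= !addn0 => Hf Hf2; rewrite ltnS leqn0 => /eqP ->.
  by move: Hf Hf2; case: (f 0); case: (f2 0).
- have Hp2 : b (pick i) = flip nu f2 (a (pick i)).
    apply: (map_eq_mem E2); by rewrite inE mem_nseq Hpos eqxx orbT.
  move: Hp2; rewrite Hpf // !flip_in ?(Hpick i).2 // Hpi.
  by case=> /(congr1 (addb (a (pick i)).2)); rewrite !addKb => ->.
Qed.

Definition frP (d : D) := (d \notin K) && ~~ inblock nu d.

Lemma swaps_sat ps (a' : nat -> D) : frl frP ps ->
  sat (M := M) (fun x => swaps ps (a' x)) p <-> sat (M := M) a' p.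
Proof.
elim: ps => [|[u v] ps IH] //= /andP [/andP [Hu Hv] Hps].
have := IH Hps.
suff : sat (M := M) (fun x => sw u v (swaps ps (a' x))) p <-> sat (M := M) (fun x => swaps ps (a' x)) p.
  by move=> H1 H2; have := H1; have := H2; tauto.
refine (@sat_inv _ M (sw u v) p (@sw_inj u v) _ _ _ (fun x => swaps ps (a' x))).
- by move=> d; exists (sw u v d); rewrite sw_invol.
- by case.
- move=> r args Hr.
  have Hok : swok (sval r) u v.
    have := rel_in_relsS Hr; case: (sval r) => [[m w]|d] /= Hr'.
    + case: (eqVneq m nu) => [->|Hm].
      * by move: Hu Hv; rewrite /frP => /andP [_ ->] /andP [_ ->].
      * apply/andP; split; apply/negP => Hb; have := K_block Hr' Hm Hb.
        -- by move: Hu; rewrite /frP => /andP [/negP].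
        -- by move: Hv; rewrite /frP => /andP [/negP].
    + have Hd := K_name Hr'; apply/andP; split; apply/eqP => E'; rewrite E' in Hd.
      -- by move: Hu; rewrite /frP Hd.
      -- by move: Hv; rewrite /frP Hd.
  exact: sw_pres Hok.
Qed.

Lemma pos_claim : sat (M := M) a p -> sat (M := M) b p.
Proof.
move=> Hp.
have [f [Hf Hfb]] := flip_step.
pose a1 := fun x => flip nu f (a x).
have [ps [Hps Hs]] : exists ps, frl frP ps /\ forall x, x \in s -> swaps ps (a1 x) = b x.
  apply: swaps_exist.
  - move=> x y Hx Hy; rewrite /a1; split => [/flip_inj /(F1 Hx Hy) //|/(F1 Hx Hy) ->//].
  - move=> x Hx; rewrite /frP /a1 flip_inblock negb_and negbK.
    case: (boolP (inblock nu (a x))) => Hin /=; first by rewrite -Hfb.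
    rewrite flip_out // orbF => HK; symmetry; exact: ((F2 Hx HK).1 erefl).
  - move=> x Hx; rewrite /frP /a1 flip_inblock (F4 Hx).
    case: (boolP (inblock nu (b x))) => Hin; rewrite ?andbF //= !andbT.
    rewrite flip_out; last by rewrite (F4 Hx).
    congr negb; apply/idP/idP => HK.
    + by rewrite ((F2 Hx HK).1 erefl).
    + by rewrite ((F2 Hx HK).2 erefl).
have E1 : sat (M := M) b p <-> sat (M := M) (fun x => swaps ps (a1 x)) p.
  apply: sat_coinc => x Hx; rewrite Hs //; exact: free_fv.
have E2 := swaps_sat a1 Hps.
have E3 : sat (M := M) a1 p <-> sat (M := M) a p by apply: flip_sat_inv.
tauto.
Qed.

End Claim.

Lemma POS : nary (Th M) nu.
Proof.
apply: nary_of => // p.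
exists (build (M := M) (Phi p) (fun a => sat (M := M) a p)); split.
- apply: bc_build => phi; exact: Phi_prop.
- apply: Th_equiv => a; split => [Ha|H].
  + apply/(build_spec (Phi p) (fun a => sat (M := M) a p) a).2; exists a; split => // phi _; exact: iff_refl.
  + have [a' [Ha' HE']] := (build_spec (Phi p) (fun a => sat (M := M) a p) a).1 H.
    exact: (pos_claim HE' Ha').
Qed.
End Pos.


Lemma ar_fin (A Nm : pred nat) n : 0 < n -> A n -> ~~ Nm n ->
  (forall k, A k -> k != n -> Nm k) -> arity_is (Th (MM A Nm)) (Some n).
Proof.
move=> Hn HA HN Hk; split; first exact: POS.
move=> m Em; have := NEG Hn HA HN; by rewrite Em.
Qed.

Lemma ar_inf (A Nm : pred nat) : (forall k, A k) -> (forall k, ~~ Nm k) ->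
  arity_is (Th (MM A Nm)) None.
Proof. move=> HA HN n; exact: (@NEG A Nm n.+1 (ltn0Sn n) (HA _) (HN _)). Qed.

Theorem theorem3p10 (mu nu : option nat)
  (hmu : forall n, mu = Some n -> 0 < n)
  (hnu : forall n, nu = Some n -> 0 < n) :
  exists (L L' : language) (T : theory L) (T' : theory L'),
    complete T /\ expansion T T' /\ arity_is T mu /\ arity_is T' nu.
Proof.
destruct mu as [m|]; destruct nu as [n|].
- have Hm := hmu m erefl; have Hn := hnu n erefl.
  exists (LL (fun k => k == m) (fun _ => false)),
         (LL (fun k => (k == m) || (k == n)) (fun k => (k == m) && (k != n))),
         (Th (MM (fun k => k == m) (fun _ => false))),
         (Th (MM (fun k => (k == m) || (k == n)) (fun k => (k == m) && (k != n)))).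
  split; first exact: Th_complete.
  split; first by apply: EXP => k //= ->.
  split.
  + apply: ar_fin => //= k /eqP ->; by rewrite eqxx.
  + apply: ar_fin => //=; first by rewrite eqxx orbT.
    * by rewrite eqxx andbF.
    * by move=> k /orP [/eqP ->|/eqP ->]; rewrite ?eqxx //= => ->.
- have Hm := hmu m erefl.
  exists (LL (fun k => k == m) (fun _ => false)), (LL (fun _ => true) (fun _ => false)),
    (Th (MM (fun k => k == m) (fun _ => false))), (Th (MM (fun _ => true) (fun _ => false))).
  split; first exact: Th_complete.
  split; first by apply: EXP.
  split; first by apply: ar_fin => //= k /eqP ->; rewrite eqxx.
  exact: ar_inf.
- have Hn := hnu n erefl.
  exists (LL (fun _ => true) (fun _ => false)), (LL (fun _ => true) (fun k => k != n)),
    (Th (MM (fun _ => true) (fun _ => false))), (Th (MM (fun _ => true) (fun k => k != n))).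
  split; first exact: Th_complete.
  split; first by apply: EXP.
  split; first exact: ar_inf.
  by apply: ar_fin => //=; rewrite eqxx.
- exists (LL (fun _ => true) (fun _ => false)), (LL (fun _ => true) (fun _ => false)),
    (Th (MM (fun _ => true) (fun _ => false))), (Th (MM (fun _ => true) (fun _ => false))).
  split; first exact: Th_complete.
  split; first by apply: EXP.
  split; exact: ar_inf.
Qed.
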